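(* Let $n\ge5$ and $S=\{1,s\}\subset\mathbb Z_n$ with $s$ an integer, $1<s<n/2$. Let $\mathbb K$ be a field of characteristic $0$. (1) If $s=2$, then for every $m\ge1$, $\Omega_m(\vec C_n^S)$ has the basis of $2n$ elements $\{\alpha_a^{(m)},\beta_a^{(m)}\}_{a\in\mathbb Z_n}$, where \[\alpha_a^{(m)}=e_{a,(a+1),\ldots,(a+m)},\qquad \beta_a^{(m)}=\sum_{j=1}^m(-1)^{m-j}\,e_{a,a+1,\ldots,a+j-1,a+j+1,a+j+2,\ldots,a+m+1}\] (indices mod $n$). (2) If $s\ne2$, then $\Omega_2(\vec C_n^S)$ has the basis of $n$ elements $\{\gamma_a\}_{a\in\mathbb Z_n}$ with $\gamma_a=e_{a,a+1,a+1+s}-e_{a,a+s,a+1+s}$, and $\Omega_m(\vec C_n^S)=0$ for all $m\ge3$.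
   Context: GLMY path complex over a field $\mathbb K$ of characteristic $0$: elementary paths $e_{v_0\cdots v_n}$, boundary $\partial e_{v_0\cdots v_n}=\sum_{j}(-1)^j e_{v_0\cdots\widehat{v_j}\cdots v_n}$, paths with two equal consecutive vertices set to $0$; $A_n(G)$ = span of paths along arrows of $G$; $\Omega_0=A_0$, $\Omega_1=A_1$, $\Omega_n=\{u\in A_n:\partial u\in A_{n-1}\}$. The circulant digraph $\vec{C}_n^S$ has vertex set $\mathbb Z_n$ and an arrow $a\to a+s$ for each $a\in\mathbb Z_n$, $s\in S$. *)

(* Defs.v *)
From HB Require Import structures.
From mathcomp Require Import all_boot all_order all_algebra.
Set Implicit Arguments. Unset Strict Implicit. Unset Printing Implicit Defensive.
Import Order.TTheory GRing.Theory Num.Theory.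
Local Open Scope ring_scope.

(* An m-chain is a K-valued function on sequences of m+1 vertices; the
   elementary path e_{v0...vm} is the indicator function of the tuple
   (v0,...,vm) if the path is regular (no two equal consecutive vertices),
   and 0 otherwise (GLMY convention). *)

Section PathComplex.
Variables (K : fieldType) (V : finType).

Definition chain (m : nat) := {ffun (m.+1).-tuple V -> K}.

Definition regular (s : seq V) : bool :=
  if s is x :: p then path (fun a b => a != b) x p else true.

Definition ep (m : nat) (s : seq V) : chain m :=
  [ffun t : (m.+1).-tuple V => ((val t == s) && regular s)%:R].

Definition del (j : nat) (s : seq V) : seq V := take j s ++ drop j.+1 s.

(* boundary operator, extended linearly from
   d e_{v0..v_{m+1}} = sum_j (-1)^j e_{v0..^vj..v_{m+1}} *)
Definition bd (m : nat) (u : chain m.+1) : chain m :=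
  [ffun t' => \sum_(t : (m.+2).-tuple V)
       u t * \sum_(j < m.+2) (-1) ^+ j * ep m (del j (val t)) t'].

Variable arr : rel V.

Definition allowed (s : seq V) : bool :=
  regular s && (if s is x :: p then path arr x p else false).

(* A_m(G): span of allowed elementary paths = chains supported on allowed paths *)
Definition Apath (m : nat) (u : chain m) : bool :=
  [forall t, (u t != 0) ==> allowed (val t)].

Definition Omega (m : nat) : pred (chain m) :=
  match m return pred (chain m) with
  | 0 => fun u => Apath u
  | m'.+1 => fun u => Apath u && Apath (bd u)
  end.

End PathComplex.

Definition lincomb (K : fieldType) (V I : finType) (m : nat)
  (c : I -> K) (f : I -> chain K V m) : chain K V m :=
  [ffun t => \sum_i c i * f i t].

Definition is_basis (K : fieldType) (V I : finType) (m : nat)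
  (P : pred (chain K V m)) (f : I -> chain K V m) : Prop :=
  [/\ forall i, P (f i),
      forall c : I -> K, lincomb c f = 0 -> forall i, c i = 0
    & forall u, P u -> exists c : I -> K, u = lincomb c f].

Definition circ_arr (n s : nat) : rel 'Z_n :=
  fun a b => (b == a + 1) || (b == a + s%:R).

Definition alpha (K : fieldType) (n m : nat) (a : 'Z_n) : chain K 'Z_n m :=
  ep K m [seq a + i%:R | i <- iota 0 m.+1].

Definition beta (K : fieldType) (n m : nat) (a : 'Z_n) : chain K 'Z_n m :=
  [ffun t => \sum_(1 <= j < m.+1)
     (-1) ^+ (m - j) * ep K m [seq a + i%:R | i <- iota 0 m.+2 & i != j] t].

Definition gamma (K : fieldType) (n s : nat) (a : 'Z_n) : chain K 'Z_n 2 :=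
  [ffun t => ep K 2 [:: a; a + 1; a + 1 + s%:R] t
           - ep K 2 [:: a; a + s%:R; a + 1 + s%:R] t].

Arguments circ_arr : clear implicits.
Arguments alpha : clear implicits.
Arguments beta : clear implicits.
Arguments gamma : clear implicits.

(* Main.v *)
Require Import Defs.
From HB Require Import structures.
From mathcomp Require Import all_boot all_order all_algebra.
From mathcomp Require Import zify ring.
Set Implicit Arguments. Unset Strict Implicit. Unset Printing Implicit Defensive.
Import Order.TTheory GRing.Theory Num.Theory.
Local Open Scope ring_scope.

Section Main.
Variables (K : fieldType) (n s : nat).
Hypotheses (n5 : (5 <= n)%N) (s1 : (1 < s)%N) (s2n : (s.*2 < n)%N).
Local Notation Z := 'Z_n.
Local Notation arr := (circ_arr n s).

Lemma mkT_proof N (f : nat -> Z) : size (mkseq f N) == N.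
Proof. by rewrite size_mkseq. Qed.
Definition mkT N (f : nat -> Z) : N.-tuple Z := Tuple (mkT_proof N f).

Lemma nth_mkT N f p : (p < N)%N -> (mkT N f)`_p = f p.
Proof. by move=> h; rewrite /= nth_mkseq. Qed.

Lemma tuple_nth_eq N (t1 t2 : N.-tuple Z) :
  (forall p, (p < N)%N -> t1`_p = t2`_p) -> t1 = t2.
Proof.
move=> h; apply: val_inj; apply: (eq_from_nth (x0 := 0)); first by rewrite !size_tuple.
by move=> i; rewrite size_tuple => /h.
Qed.

Lemma seq_tuple_eq N (t : N.-tuple Z) (q : seq Z) :
  size q = N -> (val t == q) = [forall p : 'I_N, t`_p == q`_p].
Proof.
move=> hq; apply/eqP/forallP => [-> //|h].
apply: (eq_from_nth (x0 := 0)); first by rewrite size_tuple.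
by move=> i; rewrite size_tuple => hi; apply/eqP: (h (Ordinal hi)).
Qed.

Lemma regularP N (t : N.+1.-tuple Z) :
  reflect (forall p, (p < N)%N -> t`_p != t`_p.+1) (regular (val t)).
Proof.
case: t => [[|x q] /= Ht] //; rewrite /=; move: Ht; rewrite eqSS => /eqP <-.
apply: (iffP (pathP 0)) => h p hp; exact: h.
Qed.

Lemma n_gt1 : (1 < n)%N. Proof. lia. Qed.

Lemma natZ_inj a b : (a%:R : Z) = b%:R -> (a < n)%N -> (b < n)%N -> a = b.
Proof.
move=> /(congr1 val) + ha hb; rewrite /= !val_Zp_nat ?n_gt1 //.
by rewrite !modn_small.
Qed.

Lemma oneZ : (1 : Z) = 1%:R. Proof. by []. Qed.

Lemma one_neq0 : (1 : Z) != 0.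
Proof. by apply/eqP => h; have := @natZ_inj 1 0 h; lia. Qed.

Lemma s_neq0 : (s%:R : Z) != 0.
Proof. by apply/eqP => h; have := @natZ_inj s 0 h; lia. Qed.

Lemma arr_neq a b : arr a b -> a != b.
Proof.
rewrite /circ_arr => /orP[] /eqP ->; rewrite -subr_eq0 opprD addrA subrr add0r oppr_eq0.
  exact: one_neq0.
exact: s_neq0.
Qed.

Lemma allowedP N (t : N.+1.-tuple Z) :
  reflect (forall p, (p < N)%N -> arr t`_p t`_p.+1) (allowed arr (val t)).
Proof.
apply: (iffP andP) => [[_]|h].
  case: t => [[|x q] /= Ht] //; move: Ht; rewrite eqSS => /eqP <-.
  move/(pathP 0) => h p hp; exact: h.
split; first by apply/regularP => p /h /arr_neq.
case: t h => [[|x q] /= Ht] //; move: Ht; rewrite eqSS => /eqP <- h.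
by apply/(pathP 0) => p hp; exact: h.
Qed.


Definition stp (x : Z) := (x == 1) || (x == s%:R).

Lemma arrE a b : arr a b = stp (b - a).
Proof. by rewrite /circ_arr /stp !subr_eq addrC [s%:R + _]addrC. Qed.

Lemma stpk x : stp x -> exists k, ((k = 1%N) \/ (k = s)) /\ x = k%:R.
Proof.
by case/orP => /eqP ->; [exists 1%N; split; [left|] | exists s; split; [right|]].
Qed.

Lemma sum_steps a b c d : stp a -> stp b -> stp c -> stp d -> a + b = c + d ->
  (a = c /\ b = d) \/ (a = d /\ b = c).
Proof.
move=> /stpk[ka [ha ->]] /stpk[kb [hb ->]] /stpk[kc [hc ->]] /stpk[kd [hd ->]].
rewrite -!natrD => /natZ_inj h.
have {h} h : (ka + kb = kc + kd)%N by apply: h; lia.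
have : (ka = kc /\ kb = kd) \/ (ka = kd /\ kb = kc) by lia.
by case=> -[-> ->]; [left|right].
Qed.

Lemma stp_sum a b : stp a -> stp b -> stp (a + b) -> [/\ a = 1, b = 1 & s = 2%N].
Proof.
move=> /stpk[ka [ha ->]] /stpk[kb [hb ->]] /stpk[kc [hc]].
rewrite -!natrD => /natZ_inj h.
have {h} h : (ka + kb = kc)%N by apply: h; lia.
have [-> [-> ->]] : (ka = 1 /\ kb = 1 /\ s = 2)%N by lia.
by [].
Qed.

Lemma sum_neq0 a b : stp a -> stp b -> a + b != 0.
Proof.
move=> /stpk[ka [ha ->]] /stpk[kb [hb ->]]; rewrite -natrD.
by apply/eqP => h; have := @natZ_inj _ 0 h; lia.
Qed.

Lemma stp_neq0 a : stp a -> a != 0.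
Proof. by case/orP => /eqP ->; [exact: one_neq0 | exact: s_neq0]. Qed.

Definition insT N k v (t : N.-tuple Z) : N.+1.-tuple Z :=
  mkT N.+1 (fun p => if (p < k)%N then t`_p else if p == k then v else t`_p.-1).
Definition upd N (t : N.-tuple Z) i v : N.-tuple Z :=
  mkT N (fun p => if p == i then v else t`_p).
Definition delT N j (t : N.+1.-tuple Z) : N.-tuple Z :=
  mkT N (fun p => if (p < j)%N then t`_p else t`_p.+1).

Lemma size_del j (q : seq Z) : (j < size q)%N -> size (del j q) = (size q).-1.
Proof. move=> h; rewrite /del size_cat size_take h size_drop -subn1; set k := size q; rewrite -/k in h *; lia. Qed.

Lemma nth_del j (q : seq Z) p : (j < size q)%N ->
  (del j q)`_p = if (p < j)%N then q`_p else q`_p.+1.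
Proof.
move=> h; rewrite /del nth_cat size_take h.
case: ltnP => hp; first by rewrite nth_take.
by rewrite nth_drop; congr nth; lia.
Qed.

Lemma ins_del N k (t : N.+2.-tuple Z) (t' : N.+1.-tuple Z) v : (k < N.+2)%N ->
  (t == insT k v t') = (v == t`_k) && (val t' == del k (val t)).
Proof.
move=> hk; apply/eqP/andP => [->|[/eqP -> /eqP ht']].
  rewrite nth_mkT // ltnn eqxx; split => //; apply/eqP.
  apply: (eq_from_nth (x0 := 0)); first by rewrite size_del; rewrite ?size_tuple.
  move=> p; rewrite size_tuple => hp; rewrite nth_del ?size_tuple //.
  case: ltnP => hpk; first by rewrite nth_mkT ?hpk //; lia.
  rewrite nth_mkT; last lia.
  have -> : (p.+1 < k)%N = false by lia.
  by have -> : (p.+1 == k) = false by lia.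
apply: tuple_nth_eq => p hp; rewrite nth_mkT // ht'.
case: ltngtP => h1; rewrite ?nth_del ?size_tuple ?h1 //.
  have -> : (p.-1 < k)%N = false by lia.
  by congr nth; lia.
Qed.

Lemma bdE N (u : chain K Z N.+1) (t' : N.+1.-tuple Z) :
  bd u t' = (regular (val t'))%:R *
     \sum_(k < N.+2) (-1) ^+ k * \sum_v u (insT k v t').
Proof.
have key : forall j : 'I_N.+2, \sum_v u (insT j v t') =
    \sum_t u t * (val t' == del j (val t))%:R.
  move=> j.
  transitivity (\sum_v \sum_t u t * (t == insT j v t')%:R).
    apply: eq_bigr => v _; rewrite (bigD1 (insT j v t')) //= eqxx mulr1.
    by rewrite big1 ?addr0 // => t /negbTE ->; rewrite mulr0.
  rewrite exchange_big /=; apply: eq_bigr => t _; rewrite -mulr_sumr; congr (_ * _).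
  under eq_bigr => v _ do rewrite ins_del //.
  rewrite (bigD1 (t`_j)) //= eqxx /= big1 ?addr0 // => v /negbTE -> //.
have -> : \sum_(k < N.+2) (-1) ^+ k * \sum_v u (insT k v t') =
   \sum_(k < N.+2) \sum_t (-1) ^+ k * (u t * (val t' == del k (val t))%:R).
  by apply: eq_bigr => k _; rewrite key mulr_sumr.
rewrite exchange_big /= mulr_sumr ffunE; apply: eq_bigr => t _.
rewrite mulr_sumr mulr_sumr; apply: eq_bigr => j _; rewrite ffunE.
case: eqP => [<-|] /=; last by rewrite !mulr0.
by ring.
Qed.


Lemma allowedE N (t : N.+1.-tuple Z) :
  allowed arr (val t) = [forall p : 'I_N, arr t`_p t`_p.+1].
Proof.
apply/allowedP/forallP => h p; first exact: h (ltn_ord p).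
by move=> hp; exact: h (Ordinal hp).
Qed.

Lemma ApathP N (u : chain K Z N) t : Apath arr u -> ~~ allowed arr (val t) -> u t = 0.
Proof.
move=> /forallP /(_ t) /implyP h ha; apply/eqP; apply: contraNT ha; exact: h.
Qed.

Lemma ins_not_allowed N k v (t' : N.+1.-tuple Z) i : (k <= N.+1)%N -> (i < N)%N ->
  ~~ arr t'`_i t'`_i.+1 -> k != i.+1 -> ~~ allowed arr (val (insT k v t')).
Proof.
move=> hk hi hb hki; apply/allowedP => h.
case: (leqP k i) => hki'.
  have := h i.+1 (leq_trans (ltnSn _) (hi : (i.+1 < N.+1)%N)).
  rewrite !nth_mkT; try lia.
  have -> : (i.+1 < k)%N = false by lia.
  have -> : (i.+1 == k) = false by lia.
  have -> : (i.+2 < k)%N = false by lia.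
  have -> : (i.+2 == k) = false by lia.
  by move=> /=; apply/negP.
have := h i (leq_trans hi (leqnSn _)).
rewrite !nth_mkT; try lia.
have -> : (i < k)%N = true by lia.
have -> : (i.+1 < k)%N = true by lia.
by apply/negP.
Qed.

Lemma ins_upd N k v (t' : N.+1.-tuple Z) : (k <= N.+1)%N ->
  insT k v t' = upd (insT k 0 t') k v.
Proof.
move=> hk; apply: tuple_nth_eq => p hp; rewrite !nth_mkT //.
by case: ltngtP.
Qed.

Lemma ins_delT N k v (t : N.+2.-tuple Z) : (k <= N.+1)%N ->
  insT k v (delT k t) = upd t k v.
Proof.
move=> hk; apply: tuple_nth_eq => p hp; rewrite [LHS]nth_mkT // [RHS]nth_mkT //.
case: ltngtP => h //.
  by rewrite nth_mkT ?h //; lia.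
rewrite nth_mkT; last lia.
have -> : (p.-1 < k)%N = false by lia.
by congr nth; lia.
Qed.

Lemma sum_one_nz (M : nat) (F : 'I_M -> K) (i0 : 'I_M) :
  (forall k, k != i0 -> F k = 0) -> \sum_k F k = F i0.
Proof. by move=> h; rewrite (bigD1 i0) //= big1 ?addr0. Qed.

Lemma omega_suff N (u : chain K Z N.+1) : Apath arr u ->
  (forall (t : N.+2.-tuple Z) i, (i < N)%N -> ~~ arr t`_i t`_i.+2 ->
      \sum_v u (upd t i.+1 v) = 0) -> Apath arr (bd u).
Proof.
move=> hu hc; apply/forallP => t'; apply/implyP => hnz.
apply: contraNT hnz => hna; apply/eqP.
rewrite bdE; case: (boolP (regular (val t'))) => hreg; last by rewrite mul0r.
move: hna; rewrite allowedE negb_forall => /existsP [[i hi] /= hb].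
have hi1 : (i.+1 < N.+2)%N by lia.
rewrite (sum_one_nz (i0 := Ordinal hi1)).
  rewrite /= (eq_bigr (fun v => u (upd (insT i.+1 0 t') i.+1 v))).
    rewrite hc ?mulr0 //.
    rewrite !nth_mkT; try lia.
    rewrite ltnSn.
    have -> : (i.+2 < i.+1)%N = false by lia.
    by have -> : (i.+2 == i.+1) = false by lia.
  by move=> v _; rewrite -ins_upd.
move=> k hk; rewrite big1 ?mulr0 // => v _; apply: ApathP => //.
apply: (@ins_not_allowed _ _ _ _ i) => //; first by have := ltn_ord k.
Qed.


Lemma omega_nec N (u : chain K Z N.+1) : Apath arr u -> Apath arr (bd u) ->
  forall (t : N.+2.-tuple Z) i, (i < N)%N -> allowed arr (val t) ->
  ~~ arr t`_i t`_i.+2 -> t`_i.+2 != t`_i -> \sum_v u (upd t i.+1 v) = 0.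
Proof.
move=> hu hbu t i hi /allowedP ha hb hne.
set t' := delT i.+1 t.
have ht'i : t'`_i = t`_i by rewrite nth_mkT ?ltnSn //; lia.
have ht'i1 : t'`_i.+1 = t`_i.+2 by rewrite nth_mkT ?ltnn //; lia.
have hreg : regular (val t').
  apply/regularP => p hp; rewrite !nth_mkT //; try lia.
  case: (ltngtP p.+1 i.+1) => h.
    by apply: arr_neq; apply: ha; lia.
    by apply: arr_neq; apply: ha; lia.
  have -> : p = i by lia.
  by rewrite eq_sym.
have hna : ~~ allowed arr (val t').
  by apply/allowedP => /(_ i hi); rewrite ht'i ht'i1; apply/negP.
have hz : bd u t' = 0.
  apply/eqP; apply: contraNT hna => hnz.
  by move/forallP: hbu => /(_ t') /implyP; apply.
move: hz; rewrite bdE hreg mul1r.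
have hi1 : (i.+1 < N.+2)%N by lia.
rewrite (sum_one_nz (i0 := Ordinal hi1)) /=.
  move/eqP; rewrite mulf_eq0 signr_eq0 /= => /eqP hz.
  transitivity (\sum_v u (insT i.+1 v t')); last exact: hz.
  by apply: eq_bigr => v _; rewrite ins_delT.
move=> k hk; rewrite big1 ?mulr0 // => v _; apply: ApathP => //.
apply: (@ins_not_allowed _ _ _ _ i) => //; first by have := ltn_ord k.
  by rewrite ht'i ht'i1.
Qed.


Lemma nth_upd N (t : N.-tuple Z) j v p : (p < N)%N ->
  (upd t j v)`_p = if p == j then v else t`_p.
Proof. exact: nth_mkT. Qed.

Lemma upd_id N (t : N.-tuple Z) j : upd t j t`_j = t.
Proof. by apply: tuple_nth_eq => p hp; rewrite nth_upd //; case: eqP => // ->. Qed.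

Lemma diff_step N (t : N.+1.-tuple Z) p : allowed arr (val t) -> (p < N)%N ->
  stp (t`_p.+1 - t`_p).
Proof. by move=> /allowedP h hp; rewrite -arrE; apply: h. Qed.

Lemma sum_upd N (u : chain K Z N.+1) (t : N.+2.-tuple Z) i :
  Apath arr u -> allowed arr (val t) -> (i < N)%N ->
  \sum_v u (upd t i.+1 v) = u t +
    (if t`_i.+1 - t`_i == t`_i.+2 - t`_i.+1 then 0
     else u (upd t i.+1 (t`_i + (t`_i.+2 - t`_i.+1)))).
Proof.
move=> hu ha hi.
have hd := diff_step ha (_ : (i < N.+1)%N).
have hd1 := diff_step ha (_ : (i.+1 < N.+1)%N).
have {hd hd1} [hd hd1] : stp (t`_i.+1 - t`_i) /\ stp (t`_i.+2 - t`_i.+1).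
  by split; [apply: hd | apply: hd1]; lia.
set x := t`_i in hd hd1 *; set y := t`_i.+1 in hd hd1 *; set z := t`_i.+2 in hd hd1 *.
have other : forall v, v != y -> v != x + (z - y) -> u (upd t i.+1 v) = 0.
  move=> v h1 h2; apply: ApathP => //; apply/allowedP => h.
  move: (h i (leq_trans hi (leqnSn _))) (h i.+1 hi).
  rewrite !nth_upd; try lia.
  rewrite eqxx (_ : (i == i.+1) = false); last lia.
  rewrite (_ : (i.+2 == i.+1) = false); last lia.
  rewrite !arrE -/x -/z => hv1 hv2.
  case: (sum_steps hv1 hv2 hd hd1 _).
    by ring.
    move=> [h3 _]; move/eqP: h1; apply.
    have hv : v = (v - x) + x by ring.
    by rewrite hv h3 subrK.
  move=> [h3 _]; move/eqP: h2; apply.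
  have hv : v = (v - x) + x by ring.
  by rewrite hv h3 addrC.
have hyt : upd t i.+1 y = t by rewrite /y upd_id.
rewrite (bigD1 y) //= hyt; congr (_ + _).
case: eqP => hde.
  rewrite big1 // => v hv; apply: other => //.
  by rewrite -hde addrC subrK.
have hne : x + (z - y) != y.
  by apply/eqP => h; apply: hde; rewrite -{1}h; ring.
rewrite (bigD1 (x + (z - y))) //=.
rewrite big1 ?addr0 // => v /andP [h1 h2]; exact: other.
Qed.


Lemma nec_sum N (u : chain K Z N.+1) (t : N.+2.-tuple Z) i :
  Apath arr u -> Apath arr (bd u) -> allowed arr (val t) -> (i < N)%N ->
  ~~ stp (t`_i.+2 - t`_i) -> \sum_v u (upd t i.+1 v) = 0.
Proof.
move=> hu hbu ha hi hns; apply: omega_nec => //; first by rewrite arrE.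
have hd : stp (t`_i.+1 - t`_i) by apply: diff_step => //; lia.
have hd1 : stp (t`_i.+2 - t`_i.+1) by apply: diff_step => //; lia.
have := sum_neq0 hd1 hd.
rewrite (_ : t`_i.+2 - t`_i.+1 + (t`_i.+1 - t`_i) = t`_i.+2 - t`_i); last by ring.
by rewrite subr_eq0.
Qed.

Lemma zeroL N (u : chain K Z N.+1) (t : N.+2.-tuple Z) i :
  Apath arr u -> Apath arr (bd u) -> allowed arr (val t) -> (i < N)%N ->
  t`_i.+1 - t`_i = t`_i.+2 - t`_i.+1 -> ~~ stp (t`_i.+2 - t`_i) -> u t = 0.
Proof.
move=> hu hbu ha hi he hns.
by have := nec_sum hu hbu ha hi hns; rewrite sum_upd // he eqxx addr0.
Qed.

Lemma swapL N (u : chain K Z N.+1) (t : N.+2.-tuple Z) i :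
  Apath arr u -> Apath arr (bd u) -> allowed arr (val t) -> (i < N)%N ->
  t`_i.+1 - t`_i != t`_i.+2 - t`_i.+1 ->
  u t = - u (upd t i.+1 (t`_i + (t`_i.+2 - t`_i.+1))).
Proof.
move=> hu hbu ha hi hne.
have hd : stp (t`_i.+1 - t`_i) by apply: diff_step => //; lia.
have hd1 : stp (t`_i.+2 - t`_i.+1) by apply: diff_step => //; lia.
have hns : ~~ stp (t`_i.+2 - t`_i).
  apply/negP; rewrite (_ : t`_i.+2 - t`_i = (t`_i.+1 - t`_i) + (t`_i.+2 - t`_i.+1)); last by ring.
  by case/(stp_sum hd hd1) => h1 h2 _; move: hne; rewrite h1 h2 eqxx.
have := nec_sum hu hbu ha hi hns; rewrite sum_upd // (negbTE hne).
by move/eqP; rewrite addr_eq0 => /eqP.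
Qed.

Lemma upd_allowed N (t : N.+2.-tuple Z) i : allowed arr (val t) -> (i < N)%N ->
  allowed arr (val (upd t i.+1 (t`_i + (t`_i.+2 - t`_i.+1)))).
Proof.
move=> ha hi; apply/allowedP => p hp; rewrite arrE !nth_upd; try lia.
case: (ltngtP p i) => h.
- have -> : (p == i.+1) = false by lia.
  have -> : (p.+1 == i.+1) = false by lia.
  by apply: diff_step.
- case: (ltngtP p i.+1) => h'; first lia.
    case: eqP => [?|_]; first lia.
    by apply: diff_step.
  subst p; rewrite (_ : (i.+2 == i.+1) = false); last lia.
  rewrite (_ : t`_i.+2 - (t`_i + (t`_i.+2 - t`_i.+1)) = t`_i.+1 - t`_i); last by ring.
  by apply: diff_step => //; lia.
- subst p; rewrite eqxx (_ : (i == i.+1) = false); last lia.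
  rewrite (_ : t`_i + (t`_i.+2 - t`_i.+1) - t`_i = t`_i.+2 - t`_i.+1); last by ring.
  by apply: diff_step => //; lia.
Qed.


Lemma upd_eq_seq N (t : N.-tuple Z) k v (q : seq Z) : size q = N -> (k < N)%N ->
  (val (upd t k v) == q) =
  (v == q`_k) && [forall p : 'I_N, (val p != k) ==> (t`_p == q`_p)].
Proof.
move=> hq hk; rewrite seq_tuple_eq //.
apply/forallP/andP => [h|[/eqP hv /forallP h] p].
  split; first by have := h (Ordinal hk); rewrite nth_upd //= eqxx.
  apply/forallP => p; apply/implyP => hp.
  by have := h p; rewrite nth_upd // (negbTE hp).
rewrite nth_upd //; case: (eqVneq (val p) k) => [hpk|hp]; first by rewrite hv -hpk.
by have := h p; rewrite hp.
Qed.

Lemma sum_pred1K (c : Z) (D : bool) : \sum_(v : Z) ((v == c) && D)%:R = D%:R :> K.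
Proof.
rewrite (bigD1 c) //= eqxx /= big1 ?addr0 // => v /negbTE -> //.
Qed.

Lemma sum_upd_ind N (t : N.-tuple Z) k (q : seq Z) : size q = N -> (k < N)%N ->
  \sum_(v : Z) (val (upd t k v) == q)%:R =
  [forall p : 'I_N, (val p != k) ==> (t`_p == q`_p)]%:R :> K.
Proof.
move=> hq hk; under eq_bigr => v _ do rewrite upd_eq_seq //.
exact: sum_pred1K.
Qed.

Definition Aseq m (a : Z) := [seq a + i%:R | i <- iota 0 m.+1].
Definition Bseq m (a : Z) j := [seq a + i%:R | i <- iota 0 m.+2 & i != j].

Lemma size_Aseq m a : size (Aseq m a) = m.+1.
Proof. by rewrite size_map size_iota. Qed.

Lemma nth_Aseq m a p : (p < m.+1)%N -> (Aseq m a)`_p = a + p%:R.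
Proof. by move=> hp; rewrite (nth_map 0%N) ?size_iota // nth_iota. Qed.

Lemma filter_iota_del m j : (j <= m.+1)%N ->
  [seq i <- iota 0 m.+2 | i != j] = [seq (p + (j <= p))%N | p <- iota 0 m.+1].
Proof.
move=> hj; set k := (m.+1 - j)%N.
have e1 : m.+2 = (j + k.+1)%N by rewrite /k; lia.
have e2 : m.+1 = (j + k)%N by rewrite /k; lia.
rewrite e1 e2 !iotaD filter_cat map_cat /= add0n eqxx /=.
congr (_ ++ _).
  rewrite (_ : [seq i <- iota 0 j | i != j] = iota 0 j); last first.
    by apply/all_filterP/allP => x; rewrite mem_iota; lia.
  rewrite -{1}(map_id (iota 0 j)); apply/eq_in_map => x; rewrite mem_iota => hx /=.
  by rewrite (_ : (j <= x)%N = false) ?addn0 //; lia.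
rewrite (_ : [seq i <- iota j.+1 k | i != j] = iota j.+1 k); last first.
  by apply/all_filterP/allP => x; rewrite mem_iota; lia.
rewrite (_ : j.+1 = 1 + j)%N // iotaDl; apply/eq_in_map => x; rewrite mem_iota => hx /=.
by rewrite (_ : (j <= x)%N = true) ?addn1 //; lia.
Qed.

Lemma Bseq_eq m a j : (j <= m.+1)%N ->
  Bseq m a j = [seq a + (p + (j <= p))%:R | p <- iota 0 m.+1].
Proof. by move=> hj; rewrite /Bseq filter_iota_del // -map_comp. Qed.

Lemma size_Bseq m a j : (j <= m.+1)%N -> size (Bseq m a j) = m.+1.
Proof. by move=> hj; rewrite Bseq_eq // size_map size_iota. Qed.

Lemma nth_Bseq m a j p : (j <= m.+1)%N -> (p < m.+1)%N ->
  (Bseq m a j)`_p = a + (p + (j <= p))%:R.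
Proof.
by move=> hj hp; rewrite Bseq_eq // (nth_map 0%N) ?size_iota // nth_iota.
Qed.


Definition AT m (a : Z) : m.+1.-tuple Z := mkT m.+1 (fun p => a + p%:R).
Definition BT m (a : Z) j : m.+1.-tuple Z := mkT m.+1 (fun p => a + (p + (j <= p))%:R).

Lemma AT_val m a : val (AT m a) = Aseq m a. Proof. by []. Qed.
Lemma BT_val m a j : (j <= m.+1)%N -> val (BT m a j) = Bseq m a j.
Proof. by move=> hj; rewrite Bseq_eq. Qed.

Lemma shift_diff (a : Z) X Y : (Y <= X)%N -> (a + X%:R) - (a + Y%:R) = (X - Y)%:R.
Proof. by move=> h; rewrite natrB //; ring. Qed.

Lemma stp_nat d : (d = 1 \/ d = s)%N -> stp d%:R.
Proof. by case=> ->; rewrite /stp eqxx ?orbT. Qed.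

Lemma allowed_AT m a : allowed arr (Aseq m a).
Proof.
rewrite -AT_val; apply/allowedP => p hp; rewrite arrE !nth_mkT //; last lia.
by rewrite shift_diff // subSnn; apply: stp_nat; left.
Qed.

Lemma allowed_BT m a j : s = 2%N -> (j <= m.+1)%N -> allowed arr (Bseq m a j).
Proof.
move=> hs hj; rewrite -BT_val //; apply/allowedP => p hp; rewrite arrE !nth_mkT //; last lia.
rewrite shift_diff; last by case: (j <= p)%N; case: (j <= p.+1)%N => /=; lia.
by apply: stp_nat; case: (leqP j p) => h1; case: (leqP j p.+1) => h2 /=; lia.
Qed.

Lemma regular_of_allowed q : allowed arr q -> regular q.
Proof. by case/andP. Qed.

Lemma shift_eq (a x : Z) k : a + k%:R = x + k%:R -> a = x.
Proof. exact: addIr. Qed.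

Lemma shiftS_neq (a : Z) k : a + k.+1%:R != a + k%:R.
Proof.
apply/eqP => /addrI; rewrite mulrS => /eqP.
by rewrite -subr_eq0 addrK (negbTE one_neq0).
Qed.

Lemma alphaE m x (t : m.+1.-tuple Z) : alpha K n m x t = (val t == Aseq m x)%:R.
Proof. by rewrite ffunE (regular_of_allowed (allowed_AT m x)) andbT. Qed.

Lemma betaE m x (t : m.+1.-tuple Z) : s = 2%N -> beta K n m x t =
  \sum_(1 <= j < m.+1) (-1) ^+ (m - j) * (val t == Bseq m x j)%:R.
Proof.
move=> hs; rewrite ffunE big_nat_cond [RHS]big_nat_cond; apply: eq_bigr => j /andP [hj _].
by rewrite ffunE (regular_of_allowed (@allowed_BT m x j hs _)) ?andbT //; lia.
Qed.


Lemma nth_eqseq (q1 q2 : seq Z) p : q1 = q2 -> q1`_p = q2`_p.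
Proof. by move->. Qed.

Lemma Aseq_eq m a x : (Aseq m a == Aseq m x) = (a == x).
Proof.
apply/eqP/eqP => [/(nth_eqseq 0)|->//].
by rewrite !nth_Aseq // => /shift_eq.
Qed.

Lemma Aseq_Bseq m a x j : (0 < j <= m)%N -> (Aseq m a == Bseq m x j) = false.
Proof.
move=> hj; apply/negP => /eqP h.
have := nth_eqseq 0 h; rewrite nth_Aseq // nth_Bseq //; last lia.
rewrite (_ : (j <= 0)%N = false); last lia.
move/shift_eq => hax; subst x.
have := nth_eqseq m h; rewrite nth_Aseq // nth_Bseq //; last lia.
rewrite (_ : (j <= m)%N = true) ?addn1; last lia.
by move/eqP; rewrite eq_sym (negbTE (shiftS_neq _ _)).
Qed.

Lemma Bseq_eqm m a x j : (0 < j <= m)%N ->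
  (Bseq m a m == Bseq m x j) = (a == x) && (j == m).
Proof.
move=> hj; apply/eqP/andP => [h|[/eqP -> /eqP ->] //].
have := nth_eqseq 0 h; rewrite !nth_Bseq //; try lia.
rewrite (_ : (j <= 0)%N = false); last lia.
rewrite (_ : (m <= 0)%N = false); last lia.
move/shift_eq => hax; subst x; split => //.
case: (ltngtP j m) => // hjm; last lia.
have := nth_eqseq j h; rewrite !nth_Bseq //; try lia.
rewrite (_ : (m <= j)%N = false) ?leqnn ?addn0 ?addn1; last lia.
by move/eqP; rewrite eq_sym (negbTE (shiftS_neq _ _)).
Qed.

Lemma alpha_AT m x a : alpha K n m x (AT m a) = (x == a)%:R.
Proof. by rewrite alphaE AT_val Aseq_eq eq_sym. Qed.

Lemma beta_AT m x a : s = 2%N -> (0 < m)%N -> beta K n m x (AT m a) = 0.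
Proof.
move=> hs hm; rewrite betaE // big_nat_cond big1 // => j /andP [hj _].
by rewrite AT_val Aseq_Bseq ?mulr0 //; lia.
Qed.

Lemma alpha_BT m x a : (0 < m)%N -> alpha K n m x (BT m a m) = 0.
Proof. by move=> hm; rewrite alphaE BT_val // eq_sym Aseq_Bseq //; lia. Qed.

Lemma beta_BT m x a : s = 2%N -> (0 < m)%N -> beta K n m x (BT m a m) = (x == a)%:R.
Proof.
move=> hs hm; rewrite betaE // BT_val // big_nat_recr //=.
rewrite big_nat_cond big1 ?add0r.
  by rewrite subnn expr0 mul1r Bseq_eqm ?eqxx ?andbT 1?eq_sym //; lia.
move=> j /andP [hj _]; rewrite Bseq_eqm; last lia.
by rewrite (_ : (j == m) = false) ?andbF ?mulr0 //; lia.
Qed.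


Lemma one_neq_s : (1 : Z) != s%:R.
Proof. by rewrite oneZ; apply/eqP => h; have := @natZ_inj 1 s h; lia. Qed.

Definition Pseq (a : Z) := [:: a; a + 1; a + 1 + s%:R].
Definition Qseq (a : Z) := [:: a; a + s%:R; a + 1 + s%:R].
Definition PT (a : Z) : 3.-tuple Z := [tuple a; a + 1; a + 1 + s%:R].

Lemma allowed_P a : allowed arr (Pseq a).
Proof.
have h1 : arr a (a + 1) by rewrite /circ_arr eqxx.
have h2 : arr (a + 1) (a + 1 + s%:R) by rewrite /circ_arr eqxx orbT.
by rewrite /allowed /regular /= h1 h2 (arr_neq h1) (arr_neq h2).
Qed.

Lemma allowed_Q a : allowed arr (Qseq a).
Proof.
have h1 : arr a (a + s%:R) by rewrite /circ_arr eqxx orbT.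
have h2 : arr (a + s%:R) (a + 1 + s%:R) by rewrite /circ_arr addrAC eqxx.
by rewrite /allowed /regular /= h1 h2 (arr_neq h1) (arr_neq h2).
Qed.

Lemma gammaE x (t : 3.-tuple Z) :
  gamma K n s x t = (val t == Pseq x)%:R - (val t == Qseq x)%:R.
Proof.
by rewrite ffunE !ffunE (regular_of_allowed (allowed_P x)) (regular_of_allowed (allowed_Q x)) !andbT.
Qed.

Lemma gamma_PT x a : gamma K n s x (PT a) = (x == a)%:R.
Proof.
rewrite gammaE.
have -> : (val (PT a) == Qseq x) = false.
  apply/negP => /eqP h; have := nth_eqseq 1 h; have := nth_eqseq 0 h.
  rewrite /= => ->; move/eqP; rewrite (inj_eq (addrI x)).
  by rewrite (negbTE one_neq_s).
suff -> : (val (PT a) == Pseq x) = (x == a) by rewrite subr0.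
apply/idP/idP => /eqP h; apply/eqP.
  by have := nth_eqseq 0 h.
by rewrite h.
Qed.

Lemma omega_intro N (u : chain K Z N.+1) : Apath arr u ->
  (forall (t : N.+2.-tuple Z) i, (i < N)%N -> ~~ arr t`_i t`_i.+2 ->
      \sum_v u (upd t i.+1 v) = 0) -> Omega arr u.
Proof. by move=> h1 h2; apply/andP; split => //; apply: omega_suff. Qed.

Lemma gamma_omega x : Omega arr (gamma K n s x).
Proof.
apply: omega_intro.
  apply/forallP => t; apply/implyP; rewrite gammaE.
  have [->|_] := eqVneq (val t) (Pseq x); first by move=> _; apply: allowed_P.
  have [->|_] := eqVneq (val t) (Qseq x); first by move=> _; apply: allowed_Q.
  by rewrite subrr eqxx.
move=> t i hi _; have -> : i = 0%N by lia.
under eq_bigr => v _ do rewrite gammaE.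
rewrite sumrB !sum_upd_ind //.
suff -> : [forall p : 'I_3, (val p != 1%N) ==> (t`_p == (Pseq x)`_p)] =
  [forall p : 'I_3, (val p != 1%N) ==> (t`_p == (Qseq x)`_p)] by rewrite subrr.
by apply: eq_forallb => -[[|[|[|p]]] hp] //=.
Qed.


Lemma alpha_omega N x : s = 2%N -> Omega arr (alpha K n N.+1 x).
Proof.
move=> hs; apply: omega_intro.
  apply/forallP => t; apply/implyP; apply: contraR => hna; apply/eqP; rewrite ?alphaE.
  case: eqP => [h|_] //=.
  by move: hna; rewrite h allowed_AT.
move=> t i hi hna; apply: big1 => v _; rewrite alphaE.
case: eqP => [h|_] //; exfalso; move/negP: hna; apply.
have := nth_eqseq i h; have := nth_eqseq i.+2 h.
rewrite !nth_upd ?nth_Aseq //; try lia.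
have -> : (i == i.+1) = false by lia.
have -> : (i.+2 == i.+1) = false by lia.
move=> -> ->; rewrite arrE shift_diff; last lia.
by apply: stp_nat; right; lia.
Qed.

Lemma beta_omega N x : s = 2%N -> Omega arr (beta K n N.+1 x).
Proof.
move=> hs; apply: omega_intro.
  apply/forallP => t; apply/implyP; apply: contraR => hna.
  apply/eqP; rewrite betaE // big_nat_cond big1 // => j /andP [hj _].
  case: eqP => [h|_]; last by rewrite mulr0.
  by exfalso; move: hna; rewrite h allowed_BT //; lia.
move=> t i hi hna.
set m := N.+1.
set E := fun j => [forall p : 'I_m.+1, (val p != i.+1) ==> (t`_p == (Bseq m x j)`_p)].
transitivity (\sum_(1 <= j < m.+1) (-1) ^+ (m - j) * (E j)%:R : K).
  under eq_bigr => v _ do rewrite betaE //.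
  rewrite exchange_big; apply: eq_big_nat => j hj.
  rewrite -mulr_sumr sum_upd_ind //; last lia.
  by rewrite size_Bseq //; lia.
have Ez : forall j, j != i.+1 -> j != i.+2 -> (0 < j <= m)%N -> E j = false.
  move=> j h1 h2 hj; apply/negP => /forallP hE.
  have := hE (@Ordinal m.+1 i ltac:(lia)); have := hE (@Ordinal m.+1 i.+2 ltac:(lia)).
  have -> : (i != i.+1) = true by lia.
  have -> : (i.+2 != i.+1) = true by lia.
  rewrite /=.
  rewrite !nth_Bseq //; try lia.
  move=> /eqP h3 /eqP h4; move/negP: hna; apply.
  rewrite h3 h4 arrE shift_diff; last by case: (j <= i)%N; case: (j <= i.+2)%N => /=; lia.
  apply: stp_nat; right.
  by case: (leqP j i) => a1; case: (leqP j i.+2) => a2 /=; lia.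
have E12 : E i.+1 = E i.+2.
  apply: eq_forallb => p; case: eqP => //= hp.
  rewrite !nth_Bseq //; try lia.
  by rewrite (_ : (i.+1 <= p)%N = (i.+2 <= p)%N) //; apply/idP/idP; lia.
rewrite (@big_cat_nat _ _ _ i.+1) //=; try lia.
rewrite (@big_cat_nat _ _ _ i.+3 i.+1) //=; try lia.
rewrite big_nat_cond big1 ?add0r; last first.
  by move=> j /andP [hj _]; rewrite Ez ?mulr0 //; lia.
have -> : \sum_(i.+3 <= j < m.+1) (-1) ^+ (m - j) * (E j)%:R = 0 :> K.
  rewrite big_nat_cond big1 // => j /andP [hj _]; rewrite Ez ?mulr0 //; lia.
rewrite addr0 big_ltn // big_ltn // big_geq // addr0 E12.
rewrite (_ : (m - i.+1 = (m - i.+2).+1)%N); last lia.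
by rewrite exprS; ring.
Qed.


Lemma stp_cases x : stp x -> x = 1 \/ x = s%:R.
Proof. by case/orP => /eqP ->; [left|right]. Qed.

Lemma upd_nth_ne N (t : N.-tuple Z) j v p : (p < N)%N -> p != j -> (upd t j v)`_p = t`_p.
Proof. by move=> hp hj; rewrite nth_upd // (negbTE hj). Qed.

Lemma vanish3 N (u : chain K Z N.+2) : s != 2%N -> (0 < N)%N ->
  Apath arr u -> Apath arr (bd u) -> u = 0.
Proof.
move=> hs hN hu hbu; apply/ffunP => t; rewrite ffunE.
case: (boolP (allowed arr (val t))) => ha; last exact: ApathP.
have d0 : stp (t`_1 - t`_0) by apply: diff_step.
have d1 : stp (t`_2 - t`_1) by apply: diff_step.
have d2 : stp (t`_3 - t`_2) by apply: diff_step => //; lia.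
have nd : forall d, stp d -> ~~ stp (d + d).
  by move=> d hd; apply/negP => /(stp_sum hd hd) [_ _ h2]; move/eqP: hs.
have [e01|ne01] := eqVneq (t`_1 - t`_0) (t`_2 - t`_1).
  apply: (@zeroL _ _ _ 0) => //.
  by rewrite (_ : t`_2 - t`_0 = (t`_2 - t`_1) + (t`_2 - t`_1)) ?nd //; rewrite -{2}e01; ring.
have [e12|ne12] := eqVneq (t`_2 - t`_1) (t`_3 - t`_2).
  apply: (@zeroL _ _ _ 1) => //.
  by rewrite (_ : t`_3 - t`_1 = (t`_3 - t`_2) + (t`_3 - t`_2)) ?nd //; rewrite -{2}e12; ring.
rewrite (@swapL _ _ _ 0) //.
set t'' := upd _ _ _.
have ha'' : allowed arr (val t'') by apply: upd_allowed.
have h1 : t''`_1 = t`_0 + (t`_2 - t`_1) by rewrite nth_upd.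
have h2 : t''`_2 = t`_2 by rewrite upd_nth_ne.
have h3 : t''`_3 = t`_3 by rewrite upd_nth_ne //; lia.
have e : t`_1 - t`_0 = t`_3 - t`_2.
  by case: (stp_cases d0) (stp_cases d1) (stp_cases d2) ne01 ne12 =>
    -> [] -> [] -> //; rewrite eqxx.
rewrite (@zeroL _ _ t'' 1) ?oppr0 //.
  by rewrite h1 h2 h3 -e; ring.
rewrite h1 h3 (_ : t`_3 - (t`_0 + (t`_2 - t`_1)) = (t`_3 - t`_2) + (t`_3 - t`_2)) ?nd //.
by rewrite -{2}e; ring.
Qed.


Lemma vanish2 (w : chain K Z 2) : s != 2%N ->
  Apath arr w -> Apath arr (bd w) -> (forall a, w (PT a) = 0) -> w = 0.
Proof.
move=> hs hu hbu hP; apply/ffunP => t; rewrite ffunE.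
case: (boolP (allowed arr (val t))) => ha; last exact: ApathP.
have d0 : stp (t`_1 - t`_0) by apply: diff_step.
have d1 : stp (t`_2 - t`_1) by apply: diff_step.
have nd : forall d, stp d -> ~~ stp (d + d).
  by move=> d hd; apply/negP => /(stp_sum hd hd) [_ _ h2]; move/eqP: hs.
have [e01|ne01] := eqVneq (t`_1 - t`_0) (t`_2 - t`_1).
  apply: (@zeroL _ _ _ 0) => //.
  by rewrite (_ : t`_2 - t`_0 = (t`_2 - t`_1) + (t`_2 - t`_1)) ?nd //; rewrite -{2}e01; ring.
case: (stp_cases d0) => e0.
  have e1 : t`_2 - t`_1 = s%:R.
    by case: (stp_cases d1) => // e1; move: ne01; rewrite e0 e1 eqxx.
  suff -> : t = PT t`_0 by apply: hP.
  apply: tuple_nth_eq => -[|[|[|p]]] hp //=.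
    by rewrite -e0; ring.
  by rewrite -e1 -e0; ring.
have e1 : t`_2 - t`_1 = 1.
  by case: (stp_cases d1) => // e1; move: ne01; rewrite e0 e1 eqxx.
rewrite (@swapL _ _ _ 0) //.
suff -> : upd t 1 (t`_0 + (t`_2 - t`_1)) = PT t`_0 by rewrite hP oppr0.
apply: tuple_nth_eq => -[|[|[|p]]] hp //=; rewrite ?nth_upd //=.
  by rewrite e1.
rewrite (_ : t`_2 = t`_1 + 1); last by rewrite -e1; ring.
rewrite (_ : t`_1 = t`_0 + s%:R); last by rewrite -e0; ring.
ring.
Qed.


Lemma psum N (t : N.-tuple Z) k :
  (forall q, (q < k)%N -> t`_q.+1 - t`_q = 1) -> t`_k = t`_0 + k%:R.
Proof.
elim: k => [|k IH] h; first by rewrite addr0.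
have := h k (ltnSn k); rewrite IH; last by move=> q hq; apply: h; lia.
move=> e.
have -> : t`_k.+1 = (t`_k.+1 - (t`_0 + k%:R)) + (t`_0 + k%:R) by ring.
by rewrite e mulrSr; ring.
Qed.

Lemma ss_not_stp : s = 2%N -> ~~ stp (s%:R + s%:R).
Proof.
move=> hs; apply/negP; have hst : stp s%:R by rewrite /stp eqxx orbT.
by case/(stp_sum hst hst) => h _ _; move: one_neq_s; rewrite h eqxx.
Qed.

Lemma twos2 N (w : chain K Z N.+1) : s = 2%N -> Apath arr w -> Apath arr (bd w) ->
  forall d (t : N.+2.-tuple Z) p q, allowed arr (val t) -> (p < q)%N -> (q <= N)%N ->
  (q - p = d)%N -> t`_p.+1 - t`_p = s%:R -> t`_q.+1 - t`_q = s%:R -> w t = 0.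
Proof.
move=> hs hu hbu; elim => [|d IH] t p q ha hpq hqN hd ep eq; first lia.
case: q hpq hqN hd eq => [|i] // hpq hqN hd eq.
have hi : (i < N)%N by lia.
have di : stp (t`_i.+1 - t`_i) by apply: diff_step => //; lia.
case: (stp_cases di) => ei; last first.
  apply: (@zeroL _ _ _ i) => //; first by rewrite ei eq.
  rewrite (_ : t`_i.+2 - t`_i = (t`_i.+1 - t`_i) + (t`_i.+2 - t`_i.+1)); last by ring.
  by rewrite ei eq ss_not_stp.
case: (eqVneq i p) => hip.
  by subst i; move: one_neq_s; rewrite -ep ei eqxx.
rewrite (@swapL _ _ _ i) //; last by rewrite ei eq one_neq_s.
rewrite (IH _ p i) ?oppr0 //.
- exact: upd_allowed.
- lia.
- lia.
- lia.
- rewrite nth_upd; last lia.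
  rewrite (_ : (p.+1 == i.+1) = false); last lia.
  by rewrite upd_nth_ne //; lia.
rewrite nth_upd; last lia.
rewrite eqxx upd_nth_ne; try lia.
by rewrite eq; ring.
Qed.

Lemma one2 N (w : chain K Z N.+1) : s = 2%N -> Apath arr w -> Apath arr (bd w) ->
  (forall a, w (BT N.+1 a N.+1) = 0) ->
  forall d (t : N.+2.-tuple Z) p, allowed arr (val t) -> (p <= N)%N -> (N - p = d)%N ->
  t`_p.+1 - t`_p = s%:R ->
  (forall q, (q <= N)%N -> q != p -> t`_q.+1 - t`_q = 1) -> w t = 0.
Proof.
move=> hs hu hbu hB; elim => [|d IH] t p ha hpN hd ep eq.
  have hpN' : p = N by lia.
  subst p.
  suff -> : t = BT N.+1 t`_0 N.+1 by apply: hB.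
  have hk : forall k, (k <= N)%N -> t`_k = t`_0 + k%:R.
    move=> k hk; apply: psum => q hq; apply: eq; lia.
  apply: tuple_nth_eq => k hk0; rewrite nth_mkT //.
  case: (leqP k N) => hkN.
    by rewrite addn0 hk.
  have -> : k = N.+1 by lia.
  rewrite addn1.
  rewrite (_ : t`_N.+1 = t`_N + s%:R); last by rewrite -ep; ring.
  rewrite hk // hs -addrA -natrD.
  by rewrite (_ : (N + 2 = N.+2)%N) //; lia.
have hpN' : (p < N)%N by lia.
have ep1 : t`_p.+2 - t`_p.+1 = 1 by apply: eq; lia.
rewrite (@swapL _ _ _ p) //; last by rewrite ep ep1 eq_sym one_neq_s.
rewrite (IH _ p.+1) ?oppr0 //.
- exact: upd_allowed.
- lia.
- rewrite upd_nth_ne; try lia.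
  rewrite nth_upd; last lia.
  by rewrite eqxx -ep; ring.
move=> q hq hqp.
case: (eqVneq q p) => hqp'.
  subst q; rewrite nth_upd; last lia.
  rewrite eqxx upd_nth_ne; try lia.
  by rewrite -ep1; ring.
rewrite upd_nth_ne; try lia.
rewrite upd_nth_ne; try lia.
by apply: eq.
Qed.

Lemma vanish_s2 N (w : chain K Z N.+1) : s = 2%N -> Apath arr w -> Apath arr (bd w) ->
  (forall a, w (AT N.+1 a) = 0) -> (forall a, w (BT N.+1 a N.+1) = 0) -> w = 0.
Proof.
move=> hs hu hbu hA hB; apply/ffunP => t; rewrite ffunE.
case: (boolP (allowed arr (val t))) => ha; last exact: ApathP.
have dq : forall q, (q <= N)%N -> t`_q.+1 - t`_q != 1 -> t`_q.+1 - t`_q = s%:R.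
  move=> q hq hne; have := diff_step ha (_ : (q < N.+1)%N).
  by move=> /(_ hq) /stp_cases [h|//]; move: hne; rewrite h eqxx.
case: (boolP [exists q : 'I_N.+1, t`_q.+1 - t`_q != 1]).
  move=> /existsP [q0 hq0].
  have e0 := dq _ (ltn_ord q0 : (q0 <= N)%N) hq0.
  case: (boolP [exists q : 'I_N.+1, (q != q0) && (t`_q.+1 - t`_q != 1)]).
    move=> /existsP [q1 /andP [hq10 hq1]].
    have e1 := dq _ (ltn_ord q1 : (q1 <= N)%N) hq1.
    have hne : val q1 != val q0 by [].
    case: (ltngtP q0 q1) => h.
    - by apply: (@twos2 _ _ hs hu hbu (q1 - q0) t q0 q1) => //; have := ltn_ord q1; lia.
    - by apply: (@twos2 _ _ hs hu hbu (q0 - q1) t q1 q0) => //; have := ltn_ord q0; lia.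
    - by move: hq10; rewrite -(inj_eq val_inj) /= h eqxx.
  rewrite negb_exists => /forallP hall.
  apply: (@one2 _ _ hs hu hbu hB (N - q0) t q0) => //.
    by have := ltn_ord q0; lia.
  move=> q hq hqq0; have := hall (Ordinal (hq : (q < N.+1)%N)).
  rewrite /= -(inj_eq val_inj) /= hqq0 /=.
  by move/negPn/eqP.
rewrite negb_exists => /forallP hall.
suff -> : t = AT N.+1 t`_0 by apply: hA.
apply: tuple_nth_eq => k hk; rewrite nth_mkT //; apply: psum => q hq.
by have := hall (Ordinal (_ : (q < N.+1)%N)) => /(_ ltac:(lia)) /negPn /eqP.
Qed.


Lemma lincomb_eval (I : finType) m (c : I -> K) (f : I -> chain K Z m) t i0 :
  (forall i, f i t = (i == i0)%:R) -> lincomb c f t = c i0.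
Proof.
move=> h; rewrite ffunE (bigD1 i0) //= h eqxx mulr1 big1 ?addr0 // => i hi.
by rewrite h (negbTE hi) mulr0.
Qed.

Lemma omega_sub (I : finType) N (u : chain K Z N.+1) (c : I -> K) (f : I -> chain K Z N.+1) :
  Omega arr u -> (forall i, Omega arr (f i)) ->
  Omega arr ([ffun t => u t - lincomb c f t] : chain K Z N.+1).
Proof.
move=> /andP [hu hbu] hf.
have hfa : forall i, Apath arr (f i) by move=> i; case/andP: (hf i).
have hfb : forall i, Apath arr (bd (f i)) by move=> i; case/andP: (hf i).
apply/andP; split.
  apply/forallP => t; apply/implyP; apply: contraR => hna; apply/eqP.
  rewrite !ffunE (ApathP hu hna) sub0r big1 ?oppr0 // => i _.
  by rewrite (ApathP (hfa i) hna) mulr0.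
apply/forallP => t'; apply/implyP; apply: contraR => hna; apply/eqP.
have e : bd ([ffun t => u t - lincomb c f t] : chain K Z N.+1) t' =
    bd u t' - \sum_i c i * bd (f i) t'.
  rewrite !ffunE.
  under eq_bigr => t _ do rewrite !ffunE mulrBl mulr_suml.
  rewrite sumrB; congr (_ - _).
  rewrite exchange_big /=; apply: eq_bigr => i _.
  by rewrite ffunE mulr_sumr; apply: eq_bigr => t _; rewrite mulrA.
rewrite e (ApathP hbu hna) sub0r big1 ?oppr0 // => i _.
by rewrite (ApathP (hfb i) hna) mulr0.
Qed.

Lemma main_in :
  (s = 2%N -> forall m : nat, (1 <= m)%N ->
     is_basis (@Omega K _ (circ_arr n s) m)
       (fun p : bool * 'Z_n => if p.1 then alpha K n m p.2 else beta K n m p.2))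
  /\
  (s <> 2%N ->
     is_basis (@Omega K _ (circ_arr n s) 2) (fun a : 'Z_n => gamma K n s a)
     /\ forall m : nat, (3 <= m)%N ->
          forall u : chain K 'Z_n m, @Omega K _ (circ_arr n s) m u -> u = 0).
Proof.
split.
  move=> hs [|N] // _.
  set f := fun p : bool * 'Z_n => if p.1 then alpha K n N.+1 p.2 else beta K n N.+1 p.2.
  have fA : forall a i, f i (AT N.+1 a) = (i == (true, a))%:R.
    move=> a [[] x]; rewrite /f /=; first by rewrite alpha_AT xpair_eqE.
    by rewrite beta_AT.
  have fB : forall a i, f i (BT N.+1 a N.+1) = (i == (false, a))%:R.
    move=> a [[] x]; rewrite /f /=; first by rewrite alpha_BT.
    by rewrite beta_BT // xpair_eqE.
  have fO : forall i, Omega (circ_arr n s) (f i).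
    by move=> [[] x]; rewrite /f /=; [apply: alpha_omega | apply: beta_omega].
  split.
  - exact: fO.
  - move=> c hc [[] a].
      by rewrite -(@lincomb_eval _ _ c f _ (true, a) (fA a)) hc ffunE.
    by rewrite -(@lincomb_eval _ _ c f _ (false, a) (fB a)) hc ffunE.
  - move=> u hu.
    pose c := fun p : bool * 'Z_n => if p.1 then u (AT N.+1 p.2) else u (BT N.+1 p.2 N.+1).
    exists c.
    set w := ([ffun t => u t - lincomb c f t] : chain K Z N.+1).
    have hw : Omega (circ_arr n s) w by apply: omega_sub.
    case/andP: hw => hw1 hw2.
    have w0 : w = 0.
      apply: vanish_s2 => // a; rewrite ffunE.
        by rewrite (@lincomb_eval _ _ c f _ (true, a) (fA a)) /c /= subrr.
      by rewrite (@lincomb_eval _ _ c f _ (false, a) (fB a)) /c /= subrr.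
    apply/ffunP => t; move/ffunP: w0 => /(_ t); rewrite !ffunE => /eqP.
    by rewrite subr_eq0 => /eqP.
move=> /eqP hs; split; last first.
  move=> [|[|[|N]]] // _ u /andP [hu hbu].
  by apply: vanish3.
have gP : forall a i, gamma K n s i (PT a) = (i == a)%:R.
  by move=> a i; rewrite gamma_PT.
split.
- by move=> i; apply: gamma_omega.
- by move=> c hc a; rewrite -(@lincomb_eval _ _ c _ _ a (gP a)) hc ffunE.
- move=> u hu.
  pose c := fun a => u (PT a).
  exists c.
  set w := ([ffun t => u t - lincomb c (fun a => gamma K n s a) t] : chain K Z 2).
  have hw : Omega (circ_arr n s) w by apply: omega_sub => // i; apply: gamma_omega.
  case/andP: hw => hw1 hw2.
  have w0 : w = 0.
    apply: vanish2 => // a; rewrite ffunE.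
    by rewrite (@lincomb_eval _ _ c _ _ a (gP a)) /c subrr.
  apply/ffunP => t; move/ffunP: w0 => /(_ t); rewrite !ffunE => /eqP.
  by rewrite subr_eq0 => /eqP.
Qed.

End Main.

Theorem mainTheorem7 (K : fieldType) (n s : nat) :
  [pchar K] =i pred0 -> (5 <= n)%N -> (1 < s)%N -> (s.*2 < n)%N ->
  (s = 2%N -> forall m : nat, (1 <= m)%N ->
     is_basis (@Omega K _ (circ_arr n s) m)
       (fun p : bool * 'Z_n => if p.1 then alpha K n m p.2 else beta K n m p.2))
  /\
  (s <> 2%N ->
     is_basis (@Omega K _ (circ_arr n s) 2) (fun a : 'Z_n => gamma K n s a)
     /\ forall m : nat, (3 <= m)%N ->
          forall u : chain K 'Z_n m, @Omega K _ (circ_arr n s) m u -> u = 0).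
Proof. by move=> _ h5 h1 h2; apply: main_in. Qed.
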